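(* Consider a discrete memoryless wiretap channel with input alphabet $\mathcal X=\{1,\ldots,n\}$, main channel $p(y|x)$ and eavesdropper channel $p(z|x)$, which is dominantly cyclic shift symmetric. Then for every $\mu\ge0$, $$\sup_{U\to V\to X\to(Y,Z)}\big[\mu I(V;Y)+I(V;Y|U)-I(V;Z|U)\big]=\max_{V\to X\to(Y,Z),\ |\mathcal V|\le n}\big[(\mu+1)I(V;Y)-I(V;Z)\big],$$ (suprema over finite-alphabet auxiliary variables), i.e. rate splitting ($U$ non-constant) does not improve the rate-equivocation region and an optimal channel prefix $V$ with at most $n$ values exists. In particular the secrecy capacity satisfies $$C_s=\max_{P_x}f(P_x)-\min_{P_x}f(P_x).$$
   Context: $f(P_x)=I(X;Y)-I(X;Z)$ for $X\sim P_x$, and $C_s=\sup_{V\to X\to(Y,Z)}[I(V;Y)-I(V;Z)]$ is the secrecy capacity. A channel with input alphabet $\{1,\ldots,n\}$ is cyclic shift symmetric if $I(X;Y)$ is invariant under cyclic shifts of the input distribution; a wiretap channel is cyclic shift symmetric if both its channels are; it is dominantly cyclic shift symmetric if moreover $f(\mathbf u)\ge f(P_x)$ for all $P_x$, with $\mathbf u$ the uniform distribution. The left-hand supremum, over $\mu\ge0$, traces the upper right boundary of the rate-equivocation region. *)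

(* Defs.v *)
From HB Require Import structures.
From mathcomp Require Import all_boot all_order all_algebra.
From mathcomp Require Import all_classical all_reals all_analysis.
Set Implicit Arguments. Unset Strict Implicit. Unset Printing Implicit Defensive.
Import Order.TTheory GRing.Theory Num.Theory.
Local Open Scope ring_scope.

Section Info.
Variable R : realType.

Definition is_dist (A : finType) (p : A -> R) :=
  (forall a, 0 <= p a) /\ \sum_(a : A) p a = 1.

(* discrete memoryless channel = stochastic matrix W x y = p(y|x) *)
Definition is_chan (A B : finType) (W : A -> B -> R) :=
  forall a, is_dist (W a).

Definition mutinfo (A B : finType) (P : A -> B -> R) : R :=
  \sum_(a : A) \sum_(b : B)
     P a b * ln (P a b / ((\sum_(b' : B) P a b') * (\sum_(a' : A) P a' b))).

Definition condmutinfo (A B C : finType) (P : A -> B -> C -> R) : R :=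
  \sum_(a : A) \sum_(b : B) \sum_(c : C)
     P a b c * ln (P a b c * (\sum_(b' : B) \sum_(c' : C) P a b' c') /
                   ((\sum_(c' : C) P a b c') * (\sum_(b' : B) P a b' c))).

Definition through (T X B : finType) (PXV : T -> X -> R) (W : X -> B -> R)
  (v : T) (b : B) : R := \sum_(x : X) PXV v x * W x b.

Definition jointXY (X B : finType) (P : X -> R) (W : X -> B -> R) : X -> B -> R :=
  fun x b => P x * W x b.

Definition fdiff (X TY TZ : finType) (W : X -> TY -> R) (Wz : X -> TZ -> R)
  (P : X -> R) : R :=
  mutinfo (jointXY P W) - mutinfo (jointXY P Wz).

Definition jointVB (T X B : finType) (PV : T -> R) (PXV : T -> X -> R)
  (W : X -> B -> R) : T -> B -> R :=
  fun v b => PV v * through PXV W v b.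

Definition jointUVB (S T X B : finType) (PU : S -> R) (PVU : S -> T -> R)
  (PXV : T -> X -> R) (W : X -> B -> R) : S -> T -> B -> R :=
  fun u v b => PU u * PVU u v * through PXV W v b.

Definition margV (S T : finType) (PU : S -> R) (PVU : S -> T -> R) : T -> R :=
  fun v => \sum_(u : S) PU u * PVU u v.

Definition lhs_val (S T X TY TZ : finType) (mu : R)
  (W : X -> TY -> R) (Wz : X -> TZ -> R)
  (PU : S -> R) (PVU : S -> T -> R) (PXV : T -> X -> R) : R :=
  mu * mutinfo (jointVB (margV PU PVU) PXV W)
  + condmutinfo (jointUVB PU PVU PXV W) - condmutinfo (jointUVB PU PVU PXV Wz).

Definition rhs_val (T X TY TZ : finType) (mu : R)
  (W : X -> TY -> R) (Wz : X -> TZ -> R) (PV : T -> R) (PXV : T -> X -> R) : R :=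
  (mu + 1) * mutinfo (jointVB PV PXV W) - mutinfo (jointVB PV PXV Wz).

Definition secrecy_val (T X TY TZ : finType)
  (W : X -> TY -> R) (Wz : X -> TZ -> R) (PV : T -> R) (PXV : T -> X -> R) : R :=
  mutinfo (jointVB PV PXV W) - mutinfo (jointVB PV PXV Wz).

Definition is_secrecy_capacity (n : nat) (TY TZ : finType)
  (W : 'I_n -> TY -> R) (Wz : 'I_n -> TZ -> R) (c : R) :=
  (forall (k : nat) (PV : 'I_k -> R) (PXV : 'I_k -> 'I_n -> R),
      is_dist PV -> is_chan PXV -> secrecy_val W Wz PV PXV <= c) /\
  (forall eps : R, 0 < eps ->
     exists (k : nat) (PV : 'I_k -> R) (PXV : 'I_k -> 'I_n -> R),
       [/\ is_dist PV, is_chan PXV & c - eps < secrecy_val W Wz PV PXV]).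

Definition cshift (n : nat) (P : 'I_n -> R) : 'I_n -> R := fun i => P (ordS i).

Definition cyc_sym (n : nat) (B : finType) (W : 'I_n -> B -> R) :=
  forall P : 'I_n -> R, is_dist P ->
    mutinfo (jointXY (cshift P) W) = mutinfo (jointXY P W).

Definition dom_cyc_sym (n : nat) (TY TZ : finType)
  (W : 'I_n -> TY -> R) (Wz : 'I_n -> TZ -> R) :=
  [/\ cyc_sym W, cyc_sym Wz &
      forall P : 'I_n -> R, is_dist P ->
        fdiff W Wz P <= fdiff W Wz (fun _ => n%:R^-1)].

End Info.

(* Main.v *)
Require Import Defs.
From HB Require Import structures.
From mathcomp Require Import all_boot all_order all_algebra.
From mathcomp Require Import all_classical all_reals all_analysis.
From mathcomp Require Import ring lra.
Import Order.TTheory GRing.Theory Num.Theory.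
Import numFieldNormedType.Exports.
Local Open Scope ring_scope.

Section Alg.
Variable R : realType.

Definition eta (x : R) := x * ln x.

Lemma etaA : eta 0 = 0. Proof. by rewrite /eta mul0r. Qed.

Lemma etaM x y : 0 <= x -> 0 <= y -> eta (x * y) = y * eta x + x * eta y.
Proof.
rewrite le_eqVlt => /orP[/eqP<-|x0]; first by rewrite mul0r etaA !mul0r mulr0 addr0.
rewrite le_eqVlt => /orP[/eqP<-|y0]; first by rewrite mulr0 etaA !mul0r mulr0 addr0.
by rewrite /eta lnM ?posrE //; ring.
Qed.

Lemma le_sum_term (A : finType) (F : A -> R) a :
  (forall a, 0 <= F a) -> F a <= \sum_(a' : A) F a'.
Proof.
by move=> F0; rewrite (bigD1 a) //= lerDl sumr_ge0.
Qed.

Lemma term_split (m r c : R) : 0 <= m -> m <= r -> m <= c ->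
  m * ln (m / (r * c)) = eta m - m * ln r - m * ln c.
Proof.
rewrite le_eqVlt => /orP[/eqP<-|m0] mr mc; first by rewrite !mul0r etaA !subr0.
have r0 : 0 < r by exact: lt_le_trans mr.
have c0 : 0 < c by exact: lt_le_trans mc.
rewrite ln_div ?posrE ?mulr_gt0 // lnM ?posrE // /eta; ring.
Qed.

Lemma mutinfo_eta (A B : finType) (M : A -> B -> R) :
  (forall a b, 0 <= M a b) ->
  mutinfo M = \sum_a \sum_b eta (M a b) - \sum_a eta (\sum_b M a b)
              - \sum_b eta (\sum_a M a b).
Proof.
move=> M0; rewrite /mutinfo.
under eq_bigr => a _.
  under eq_bigr => b _.
    rewrite term_split; last 3 first.
      exact: M0.
      exact: (@le_sum_term B (M a) b (fun b' => M0 a b')).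
      exact: (@le_sum_term A (fun a => M a b) a (fun a' => M0 a' b)).
    over.
  rewrite sumrB sumrB.
  rewrite [X in _ - X - _](_ : _ = eta (\sum_b M a b)); last by rewrite /eta mulr_suml.
  over.
rewrite sumrB sumrB.
congr (_ - _ - _).
rewrite exchange_big /=; apply: eq_bigr => b _.
by rewrite /eta mulr_suml.
Qed.


Lemma term_split3 (m s r c : R) : 0 <= m -> m <= s -> m <= r -> m <= c ->
  m * ln (m * s / (r * c)) = eta m + m * ln s - m * ln r - m * ln c.
Proof.
rewrite le_eqVlt => /orP[/eqP<-|m0] ms mr mc; first by rewrite !mul0r etaA !subr0 addr0.
have s0 : 0 < s by exact: lt_le_trans ms.
have r0 : 0 < r by exact: lt_le_trans mr.
have c0 : 0 < c by exact: lt_le_trans mc.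
rewrite ln_div ?posrE ?mulr_gt0 // !lnM ?posrE // /eta; ring.
Qed.

Lemma condmutinfo_eta (A B C : finType) (P : A -> B -> C -> R) :
  (forall a b c, 0 <= P a b c) ->
  condmutinfo P = \sum_a \sum_b \sum_c eta (P a b c)
     + \sum_a eta (\sum_b \sum_c P a b c)
     - \sum_a \sum_b eta (\sum_c P a b c)
     - \sum_a \sum_c eta (\sum_b P a b c).
Proof.
move=> P0; rewrite /condmutinfo.
have le_r a b c : P a b c <= \sum_c' P a b c'.
  exact: (@le_sum_term C (P a b) c (fun c' => P0 a b c')).
have le_k a b c : P a b c <= \sum_b' P a b' c.
  exact: (@le_sum_term B (fun b' => P a b' c) b (fun b' => P0 a b' c)).
have le_s a b c : P a b c <= \sum_b' \sum_c' P a b' c'.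
  apply: le_trans (le_r a b c) _.
  apply: (@le_sum_term B (fun b' => \sum_c' P a b' c') b) => b'.
  by apply: sumr_ge0 => c' _.
under eq_bigr => a _.
  under eq_bigr => b _.
    under eq_bigr => c _.
      rewrite term_split3 //.
      over.
    rewrite sumrB sumrB big_split /=.
    rewrite [X in _ + X - _ - _](_ : _ = (\sum_c P a b c) * ln (\sum_b' \sum_c' P a b' c'));
      last by rewrite mulr_suml.
    rewrite [X in _ + _ - X - _](_ : _ = eta (\sum_c P a b c)); last by rewrite /eta mulr_suml.
    over.
  rewrite sumrB sumrB big_split /=.
  rewrite [X in _ + X - _ - _](_ : _ = eta (\sum_b \sum_c P a b c)); last by rewrite /eta mulr_suml.
  rewrite [X in _ + _ - _ - X](_ : _ = \sum_c eta (\sum_b P a b c)).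
    over.
  rewrite exchange_big /=; apply: eq_bigr => c _.
  by rewrite /eta mulr_suml.
by rewrite sumrB sumrB big_split.
Qed.

Section Chan.
Variables (X B : finType).
Implicit Types (W : X -> B -> R) (P : X -> R).

Definition out W P b := \sum_x P x * W x b.
Definition EE W P := \sum_b eta (out W P b).
Definition cW W x := \sum_b eta (W x b).

Lemma chan_ge0 W : is_chan W -> forall x b, 0 <= W x b.
Proof. by move=> H x b; case: (H x) => + _; apply. Qed.

Lemma chan_sum1 W : is_chan W -> forall x, \sum_b W x b = 1.
Proof. by move=> H x; case: (H x). Qed.

Lemma out_ge0 W P : is_chan W -> (forall x, 0 <= P x) -> forall b, 0 <= out W P b.
Proof.
move=> HW HP b; apply: sumr_ge0 => x _; apply: mulr_ge0 => //; exact: chan_ge0.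
Qed.

Lemma sum_out W P : is_chan W -> \sum_b out W P b = \sum_x P x.
Proof.
move=> HW; rewrite /out exchange_big /=; apply: eq_bigr => x _.
by rewrite -mulr_sumr chan_sum1 // mulr1.
Qed.

Lemma I_form W P : is_chan W -> (forall x, 0 <= P x) ->
  mutinfo (jointXY P W) = \sum_x P x * cW W x - EE W P.
Proof.
move=> HW HP; rewrite mutinfo_eta; last first.
  by move=> x b; rewrite /jointXY; apply: mulr_ge0 => //; exact: chan_ge0.
rewrite /jointXY.
under eq_bigr => x _.
  under eq_bigr => b _ do rewrite (@etaM (P x) (W x b) (HP x) (chan_ge0 W HW x b)).
  rewrite big_split /= -mulr_suml -mulr_sumr chan_sum1 // mul1r.
  over.
under [X in _ - X - _]eq_bigr => x _ do rewrite -mulr_sumr chan_sum1 // mulr1.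
rewrite big_split /= /EE /out.
rewrite /cW; ring.
Qed.

End Chan.


Arguments chan_ge0 {X B W}.
Arguments out {X B}. Arguments EE {X B}. Arguments cW {X B}.
Arguments sum_out {X B}. Arguments I_form {X B}. Arguments out_ge0 {X B}.
Arguments chan_sum1 {X B W}.

Definition mix (T X : finType) (PV : T -> R) (PXV : T -> X -> R) (x : X) :=
  \sum_v PV v * PXV v x.

Arguments mix {T X}.

Section VB.
Variables (S T X B : finType) (W : X -> B -> R).
Hypothesis HW : is_chan W.

Lemma out_mix (PV : T -> R) (PXV : T -> X -> R) b :
  out W (mix PV PXV) b = \sum_v PV v * out W (PXV v) b.
Proof.
rewrite /out /mix.
under eq_bigr => x _ do rewrite mulr_suml.
rewrite exchange_big /=; apply: eq_bigr => v _.
by rewrite mulr_sumr; apply: eq_bigr => x _; rewrite mulrA.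
Qed.

Lemma sum_out1 (P : X -> R) : is_dist P -> \sum_b out W P b = 1.
Proof. by case=> _ H; rewrite sum_out. Qed.

Lemma dist_ge0 {A : finType} {P : A -> R} : is_dist P -> forall a, 0 <= P a.
Proof. by case. Qed.

Lemma VB_form (PV : T -> R) (PXV : T -> X -> R) :
  (forall v, 0 <= PV v) -> is_chan PXV ->
  mutinfo (jointVB PV PXV W) =
  \sum_v PV v * EE W (PXV v) - EE W (mix PV PXV).
Proof.
move=> HPV HPXV.
have -> : jointVB PV PXV W = fun v b => PV v * out W (PXV v) b by [].
have o0 v b : 0 <= out W (PXV v) b.
  by apply: out_ge0 => // x; exact: (dist_ge0 (HPXV v)).
rewrite mutinfo_eta; last by move=> v b; apply: mulr_ge0.
under eq_bigr => v _.
  under eq_bigr => b _ do rewrite (@etaM (PV v) (out W (PXV v) b) (HPV v) (o0 v b)).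
  rewrite big_split /= -mulr_suml -mulr_sumr sum_out1 // mul1r.
  over.
under [X in _ - X - _]eq_bigr => v _ do rewrite -mulr_sumr sum_out1 // mulr1.
under [X in _ - _ - X]eq_bigr => b _ do rewrite -out_mix.
rewrite big_split /=; rewrite /EE; ring.
Qed.

Lemma UVB_form (PU : S -> R) (PVU : S -> T -> R) (PXV : T -> X -> R) :
  (forall u, 0 <= PU u) -> is_chan PVU -> is_chan PXV ->
  condmutinfo (jointUVB PU PVU PXV W) =
  \sum_u PU u * mutinfo (jointVB (PVU u) PXV W).
Proof.
move=> HPU HPVU HPXV.
have -> : jointUVB PU PVU PXV W = fun u v b => PU u * PVU u v * out W (PXV v) b by [].
have o0 v b : 0 <= out W (PXV v) b.
  by apply: out_ge0 => // x; exact: (dist_ge0 (HPXV v)).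
have q0 u v : 0 <= PU u * PVU u v by apply: mulr_ge0 => //; exact: (dist_ge0 (HPVU u)).
have mixd u : is_dist (mix (PVU u) PXV).
  split.
    move=> x; apply: sumr_ge0 => v _; apply: mulr_ge0; first exact: (dist_ge0 (HPVU u)).
    exact: (dist_ge0 (HPXV v)).
  rewrite /mix exchange_big /=.
  under eq_bigr => v _ do rewrite -mulr_sumr (chan_sum1 HPXV) mulr1.
  exact: (chan_sum1 HPVU).
have mo0 u b : 0 <= out W (mix (PVU u) PXV) b.
  by apply: out_ge0 => // x; exact: (dist_ge0 (mixd u)).
rewrite condmutinfo_eta; last by move=> u v b; apply: mulr_ge0.
under eq_bigr => u _.
  under eq_bigr => v _.
    under eq_bigr => b _ do rewrite (@etaM _ (out W (PXV v) b) (q0 u v) (o0 v b)).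
    rewrite big_split /= -mulr_suml -mulr_sumr sum_out1 // mul1r.
    over.
  over.
under [X in _ + X - _ - _]eq_bigr => u _.
  under eq_bigr => v _ do rewrite -mulr_sumr sum_out1 // mulr1.
  rewrite -mulr_sumr (chan_sum1 HPVU) mulr1.
  over.
under [X in _ + _ - X - _]eq_bigr => u _.
  under eq_bigr => v _ do rewrite -mulr_sumr sum_out1 // mulr1.
  over.
under [X in _ + _ - _ - X]eq_bigr => u _.
  under eq_bigr => b _.
    rewrite (_ : \sum_v _ = PU u * out W (mix (PVU u) PXV) b); last first.
      by rewrite out_mix mulr_sumr; apply: eq_bigr => v _; rewrite mulrA.
    rewrite (@etaM (PU u) _ (HPU u) (mo0 u b)).
    over.
  rewrite big_split /= -mulr_suml -mulr_sumr sum_out1 // mul1r.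
  over.
under [RHS]eq_bigr => u _.
  rewrite VB_form //; last exact: (dist_ge0 (HPVU u)).
  rewrite mulrBr mulr_sumr.
  under eq_bigr => v _ do rewrite mulrA.
  over.
rewrite /= sumrB.
under [X in X + _ - _ - _]eq_bigr => u _ do rewrite big_split.
rewrite big_split [X in _ - X = _]big_split /= /EE.
ring.
Qed.

End VB.


Arguments out_mix {T X B W}.
Arguments VB_form {T X B W}.
Arguments UVB_form {S T X B W}.
Arguments dist_ge0 {A P}.

Lemma mutinfo_ge0 (A B : finType) (M : A -> B -> R) :
  (forall a b, 0 <= M a b) -> \sum_a \sum_b M a b = 1 -> 0 <= mutinfo M.
Proof.
move=> M0 M1.
set r := fun a => \sum_b M a b.
set c := fun b => \sum_a M a b.
have r0 a : 0 <= r a by apply: sumr_ge0.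
have c0 b : 0 <= c b by apply: sumr_ge0.
have key a b : M a b - r a * c b <= M a b * ln (M a b / (r a * c b)).
  have mr : M a b <= r a := @le_sum_term B (M a) b (fun b' => M0 a b').
  have mc : M a b <= c b := @le_sum_term A (fun a => M a b) a (fun a' => M0 a' b).
  move: (M0 a b); rewrite le_eqVlt => /orP[/eqP<-|m0].
    by rewrite mul0r sub0r oppr_le0 mulr_ge0.
  have rp : 0 < r a by exact: lt_le_trans mr.
  have cp : 0 < c b by exact: lt_le_trans mc.
  have rcp : 0 < r a * c b by rewrite mulr_gt0.
  have h := @le_ln1Dx R (r a * c b / M a b - 1).
  rewrite addrCA subrr addr0 in h.
  have := h (_ : -1 < r a * c b / M a b - 1).
  have hp : 0 < r a * c b / M a b by rewrite divr_gt0.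
  move=> /(_ ltac:(lra)).
  rewrite ln_div ?posrE // ln_div ?posrE // => hl.
  have h2 : M a b * (ln (r a * c b) - ln (M a b)) <= M a b * (r a * c b / M a b - 1).
    by rewrite ler_wpM2l // ltW.
  have e1 : M a b * (r a * c b / M a b) = r a * c b.
    by rewrite mulrCA divff ?gt_eqF // mulr1.
  rewrite !mulrBr e1 mulr1 in h2.
  rewrite mulrBr.
  lra.
have : \sum_a \sum_b (M a b - r a * c b) <= mutinfo M.
  by apply: ler_sum => a _; apply: ler_sum => b _; exact: key.
suff -> : \sum_a \sum_b (M a b - r a * c b) = 0 by [].
under eq_bigr => a _ do rewrite sumrB -mulr_sumr.
rewrite sumrB -mulr_suml M1.
have -> : \sum_b c b = 1 by rewrite /c exchange_big.
by rewrite mulr1 subrr.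
Qed.

Lemma mix_dist (T X : finType) (PV : T -> R) (PXV : T -> X -> R) :
  is_dist PV -> is_chan PXV -> is_dist (mix PV PXV).
Proof.
move=> HPV HPXV; split.
  move=> x; apply: sumr_ge0 => v _; apply: mulr_ge0; first exact: (dist_ge0 HPV).
  exact: (dist_ge0 (HPXV v)).
rewrite /mix exchange_big /=.
under eq_bigr => v _ do rewrite -mulr_sumr (chan_sum1 HPXV) mulr1.
by case: HPV.
Qed.

Lemma VB_I (T X B : finType) (W : X -> B -> R) (PV : T -> R) (PXV : T -> X -> R) :
  is_chan W -> (forall v, 0 <= PV v) -> is_chan PXV ->
  mutinfo (jointVB PV PXV W) =
  mutinfo (jointXY (mix PV PXV) W) - \sum_v PV v * mutinfo (jointXY (PXV v) W).
Proof.
move=> HW HPV HPXV.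
have mix0 x : 0 <= mix PV PXV x.
  apply: sumr_ge0 => v _; apply: mulr_ge0 => //; exact: (dist_ge0 (HPXV v)).
rewrite VB_form // (I_form W (mix PV PXV) HW mix0).
rewrite [Y in _ = _ - Y](eq_bigr (fun v => PV v * (\sum_x PXV v x * cW W x - EE W (PXV v)))); last first.
  by move=> v _; rewrite I_form //; exact: (dist_ge0 (HPXV v)).
under [Y in _ = _ - Y]eq_bigr => v _ do rewrite mulrBr mulr_sumr.
rewrite sumrB.
have -> : \sum_x mix PV PXV x * cW W x = \sum_v \sum_x PV v * (PXV v x * cW W x).
  rewrite /mix; under eq_bigr => x _ do rewrite mulr_suml.
  rewrite exchange_big /=; apply: eq_bigr => v _.
  by apply: eq_bigr => x _; rewrite mulrA.
ring.
Qed.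



Local Open Scope classical_set_scope.
Definition etz (y : R) := `|y| * ln `|y|.

Lemma eta0_cont : continuous etz.
Proof.
move=> x.
have [->|x0] := eqVneq x 0; last first.
  have nx : 0 < `|x| by rewrite normr_gt0.
  have h1 : {for x, continuous (Num.norm : R -> R)} by exact: norm_continuous.
  have h2 : {for x, continuous (@ln R \o (Num.norm : R -> R))}.
    apply: continuous_comp; first exact: h1.
    exact: continuous_ln.
  exact: (continuousM h1 h2).
apply/cvgrPdist_lt => e e0.
have c0 : 0 < e / 2 by rewrite divr_gt0.
set L := `|ln (e / 2)|.
have L0 : 0 <= L by rewrite /L normr_ge0.
set d := Num.min 1 (e / (2 * (L + 1))).
have d0 : 0 < d.
  rewrite /d lt_min ltr01 /= divr_gt0 // mulr_gt0 //; lra.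
apply/nbhs_ballP; exists d => // t /= Ht.
rewrite /etz normr0 mul0r sub0r normrN.
rewrite sub0r normrN in Ht.
set s := `|t| in Ht *.
have s0 : 0 <= s by rewrite /s normr_ge0.
have s1 : s < 1 by apply: lt_le_trans Ht _; rewrite /d ge_min lexx.
have sd : s < e / (2 * (L + 1)) by apply: lt_le_trans Ht _; rewrite /d ge_min lexx orbT.
move: s0; rewrite le_eqVlt => /orP[/eqP<-|sp].
  by rewrite mul0r normr0.
have hle : s * ln s <= 0 by apply: mulr_ge0_le0; [exact: ltW | exact: ln_le0 (ltW s1)].
rewrite ler0_norm //.
have h := @le_ln1Dx R (e / 2 / s - 1).
rewrite addrCA subrr addr0 in h.
have hp : 0 < e / 2 / s by rewrite divr_gt0.
have := h ltac:(lra).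
rewrite ln_div ?posrE // => hl.
have h2 : s * (ln (e / 2) - ln s) <= s * (e / 2 / s - 1).
  by rewrite ler_wpM2l // ltW.
have e1 : s * (e / 2 / s) = e / 2.
  by rewrite mulrCA divff ?gt_eqF // mulr1.
rewrite !mulrBr e1 mulr1 in h2.
have hL : - (s * ln (e / 2)) <= s * L.
  rewrite -mulrN; apply: ler_wpM2l; first exact: ltW sp.
  by rewrite /L -normrN ler_norm.
have hd : s * (L + 1) < e / 2.
  have : s * (L + 1) < e / (2 * (L + 1)) * (L + 1).
    by rewrite ltr_pM2r //; lra.
  rewrite invfM mulrA -mulrA mulVf ?mulr1 //; lra.
rewrite mulrDr mulr1 in hd.
lra.
Qed.

Lemma cont_sum_seq (T : topologicalType) (I : Type) (F : I -> T -> R) (s : seq I) :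
  (forall i, continuous (F i)) -> continuous (fun v => \sum_(i <- s) F i v).
Proof.
move=> H; elim: s => [|i s IH].
  have -> : (fun v : T => \sum_(i <- [::]) F i v) = (fun=> 0) by apply: funext => v; rewrite big_nil.
  exact: cst_continuous.
have -> : (fun v : T => \sum_(j <- i :: s) F j v) = (F i + (fun v => \sum_(j <- s) F j v)).
  by apply: funext => v; rewrite big_cons.
by move=> x; apply: continuousD; [exact: H | exact: IH].
Qed.

Lemma cont_sum (T : topologicalType) (I : finType) (F : I -> T -> R) :
  (forall i, continuous (F i)) -> continuous (fun v => \sum_(i : I) F i v).
Proof. exact: cont_sum_seq. Qed.

Lemma cont_mulc (T : topologicalType) (f : T -> R) (c : R) :
  continuous f -> continuous (fun v => f v * c).
Proof.
move=> H x; apply: (@continuousM _ _ f (fun=> c)); first exact: H.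
exact: cst_continuous.
Qed.

Lemma cont_cmul (T : topologicalType) (f : T -> R) (c : R) :
  continuous f -> continuous (fun v => c * f v).
Proof.
move=> H x; apply: (@continuousM _ _ (fun=> c) f); last exact: H.
exact: cst_continuous.
Qed.

Lemma cont_sub (T : topologicalType) (f g : T -> R) :
  continuous f -> continuous g -> continuous (fun v => f v - g v).
Proof.
move=> Hf Hg x; apply: (@continuousD _ _ _ f (fun v => - g v)); first exact: Hf.
by apply: continuousN; exact: Hg.
Qed.
Local Close Scope classical_set_scope.

Arguments VB_I {T X B W}.
Arguments mix_dist {T X}.

Section Cyc.
Variable n : nat.
Hypothesis n0 : (0 < n)%N.

Definition shift (j : nat) (P : 'I_n -> R) := iter j (@cshift R n) P.
Definition unif : 'I_n -> R := fun _ => n%:R^-1.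

Lemma shift_val j P x : shift j P x = P (iter j (@ordS n) x).
Proof.
elim: j x => [//|j IH] x.
by rewrite /shift iterS {1}/cshift -/(shift j P) IH -iterSr.
Qed.

Lemma iter_ordS_val j (x : 'I_n) : val (iter j (@ordS n) x) = ((x + j) %% n)%N.
Proof.
elim: j => [|j IH]; first by rewrite addn0 modn_small.
by rewrite iterS /= IH -addn1 modnDml addn1 addnS.
Qed.

Lemma iter_ordS_inj (x : 'I_n) : injective (fun j : 'I_n => iter j (@ordS n) x).
Proof.
move=> j k /(congr1 val); rewrite !iter_ordS_val => /eqP.
rewrite eqn_modDl !modn_small // => /eqP h; exact: val_inj.
Qed.

Lemma sum_shift P x : \sum_(j < n) shift j P x = \sum_y P y.
Proof.
rewrite [RHS](reindex_inj (iter_ordS_inj x)); apply: eq_bigr => j _.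
by rewrite shift_val.
Qed.

Lemma cshift_dist P : is_dist P -> is_dist (@cshift R n P).
Proof.
case=> P0 P1; split; first by move=> i; exact: P0.
by rewrite -P1 [RHS](reindex_inj (@ordS_inj n)).
Qed.

Lemma shift_dist j P : is_dist P -> is_dist (shift j P).
Proof.
move=> HP; elim: j => [//|j IH].
by rewrite /shift iterS; apply: cshift_dist.
Qed.

Lemma shift_chan P : is_dist P -> is_chan (fun j : 'I_n => shift j P).
Proof. by move=> HP j; exact: shift_dist. Qed.

Lemma cyc_shift (B : finType) (W : 'I_n -> B -> R) j P :
  cyc_sym W -> is_dist P -> mutinfo (jointXY (shift j P) W) = mutinfo (jointXY P W).
Proof.
move=> Hc HP; elim: j => [//|j IH].
by rewrite /shift iterS Hc ?IH //; exact: shift_dist.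
Qed.

Lemma n_neq0 : (n%:R : R) != 0.
Proof. by rewrite pnatr_eq0 -lt0n. Qed.

Lemma unif_dist : is_dist unif.
Proof.
split; first by move=> i; rewrite /unif invr_ge0 ler0n.
rewrite /unif sumr_const card_ord -(mulr_natr (n%:R^-1)) mulVf //; exact: n_neq0.
Qed.

Lemma sum_unif_const (c : R) : \sum_(j < n) unif j * c = c.
Proof.
rewrite /unif sumr_const card_ord -(mulr_natr (n%:R^-1 * c)) mulrAC mulVf ?mul1r //; exact: n_neq0.
Qed.

Lemma mix_unif P : is_dist P -> mix unif (fun j : 'I_n => shift j P) = unif.
Proof.
case=> _ P1; apply: funext => x.
by rewrite /mix /unif -mulr_sumr sum_shift P1 mulr1.
Qed.

Lemma IY_max (B : finType) (W : 'I_n -> B -> R) P :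
  is_chan W -> cyc_sym W -> is_dist P ->
  mutinfo (jointXY P W) <= mutinfo (jointXY unif W).
Proof.
move=> HW Hc HP.
have HU := unif_dist.
have HS := shift_chan _ HP.
have H0 : 0 <= mutinfo (jointVB unif (fun j : 'I_n => shift j P) W).
  apply: mutinfo_ge0.
    move=> j b; apply: mulr_ge0; first exact: (dist_ge0 HU).
    apply: out_ge0 => // x; exact: (dist_ge0 (HS j)).
  have -> : jointVB unif (fun j : 'I_n => shift j P) W =
    fun j b => unif j * out W (shift j P) b by [].
  under eq_bigr => j _ do rewrite -mulr_sumr sum_out1 // mulr1.
  by case: HU.
rewrite VB_I // in H0; last exact: (dist_ge0 HU).
rewrite mix_unif // in H0.
rewrite (eq_bigr (fun j => unif j * mutinfo (jointXY P W))) in H0; last first.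
  by move=> j _; rewrite cyc_shift.
by rewrite sum_unif_const subr_ge0 in H0.
Qed.

Section Main.
Variables (TY TZ : finType) (W : 'I_n -> TY -> R) (Wz : 'I_n -> TZ -> R).
Hypotheses (HW : is_chan W) (HWz : is_chan Wz) (Hd : dom_cyc_sym W Wz).

Definition G (mu : R) (P : 'I_n -> R) :=
  (mu + 1) * mutinfo (jointXY P W) - mutinfo (jointXY P Wz).

Lemma HcY : cyc_sym W. Proof. by case: Hd. Qed.
Lemma HcZ : cyc_sym Wz. Proof. by case: Hd. Qed.
Lemma Hf P : is_dist P -> fdiff W Wz P <= fdiff W Wz unif.
Proof. by case: Hd => _ _; apply. Qed.
Arguments Hf {P}.

Lemma G_le_unif mu P : 0 <= mu -> is_dist P -> G mu P <= G mu unif.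
Proof.
move=> mu0 HP; rewrite /G.
have h1 := @IY_max _ W P HW HcY HP.
have h2 := Hf HP; rewrite /fdiff in h2.
have h3 : 0 <= mu * (mutinfo (jointXY unif W) - mutinfo (jointXY P W)).
  by apply: mulr_ge0 => //; rewrite subr_ge0.
rewrite mulrBr in h3; lra.
Qed.
Arguments G_le_unif {mu P}.

Lemma G_shift mu j P : is_dist P -> G mu (shift j P) = G mu P.
Proof.
by move=> HP; rewrite /G (cyc_shift _ _ _ _ HcY) // (cyc_shift _ _ _ _ HcZ).
Qed.

Lemma rhs_G mu (T : finType) (PV : T -> R) (PXV : T -> 'I_n -> R) :
  is_dist PV -> is_chan PXV ->
  rhs_val mu W Wz PV PXV = G mu (mix PV PXV) - \sum_v PV v * G mu (PXV v).
Proof.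
move=> HPV HPXV.
rewrite /rhs_val !VB_I //; try exact: (dist_ge0 HPV).
rewrite /G.
under [X in _ = _ - X]eq_bigr => v _ do rewrite mulrBr mulrCA.
rewrite sumrB -mulr_sumr; ring.
Qed.

Lemma sum_ge_min (T : finType) (PV : T -> R) (PXV : T -> 'I_n -> R) mu Pm :
  is_dist PV -> is_chan PXV -> (forall P, is_dist P -> G mu Pm <= G mu P) ->
  G mu Pm <= \sum_v PV v * G mu (PXV v).
Proof.
move=> HPV HPXV Hm.
have -> : G mu Pm = \sum_v PV v * G mu Pm.
  by rewrite -mulr_suml; case: HPV => _ ->; rewrite mul1r.
apply: ler_sum => v _; apply: ler_wpM2l; first exact: (dist_ge0 HPV).
exact: Hm.
Qed.
Arguments sum_ge_min {T PV PXV mu Pm}.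

Lemma rhs_le mu (T : finType) (PV : T -> R) (PXV : T -> 'I_n -> R) Pm :
  0 <= mu -> is_dist PV -> is_chan PXV ->
  (forall P, is_dist P -> G mu Pm <= G mu P) ->
  rhs_val mu W Wz PV PXV <= G mu unif - G mu Pm.
Proof.
move=> mu0 HPV HPXV Hm.
rewrite rhs_G //.
have h1 := G_le_unif mu0 (mix_dist _ _ HPV HPXV).
have h2 := sum_ge_min HPV HPXV Hm.
lra.
Qed.

Lemma rhs_opt mu Pm : is_dist Pm ->
  rhs_val mu W Wz unif (fun j : 'I_n => shift j Pm) = G mu unif - G mu Pm.
Proof.
move=> HP; rewrite rhs_G //; first last.
  exact: shift_chan.
  exact: unif_dist.
rewrite mix_unif //.
under eq_bigr => j _ do rewrite G_shift //.
by rewrite sum_unif_const.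
Qed.

Lemma sum_marg (S T : finType) (PU : S -> R) (PVU : S -> T -> R) (h : T -> R) :
  \sum_u PU u * (\sum_v PVU u v * h v) = \sum_v mix PU PVU v * h v.
Proof.
rewrite /mix; under [RHS]eq_bigr => v _ do rewrite mulr_suml.
rewrite [RHS]exchange_big /=; apply: eq_bigr => u _.
by rewrite mulr_sumr; apply: eq_bigr => v _; rewrite mulrA.
Qed.

Lemma lhs_le mu (S T : finType) (PU : S -> R) (PVU : S -> T -> R)
  (PXV : T -> 'I_n -> R) Pm :
  0 <= mu -> is_dist PU -> is_chan PVU -> is_chan PXV ->
  (forall P, is_dist P -> G mu Pm <= G mu P) ->
  lhs_val mu W Wz PU PVU PXV <= G mu unif - G mu Pm.
Proof.
move=> mu0 HPU HPVU HPXV Hm.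
have Hpv := mix_dist _ _ HPU HPVU.
rewrite /lhs_val !UVB_form //; try exact: (dist_ge0 HPU).
have -> : margV PU PVU = mix PU PVU by [].
rewrite VB_I //; last exact: (dist_ge0 Hpv).
under [X in _ + X - _ <= _]eq_bigr => u _ do rewrite (VB_I (PVU u) PXV HW (dist_ge0 (HPVU u)) HPXV) mulrBr.
under [X in _ - X <= _]eq_bigr => u _ do rewrite (VB_I (PVU u) PXV HWz (dist_ge0 (HPVU u)) HPXV) mulrBr.
rewrite !sumrB !sum_marg.
set PX := mix (mix PU PVU) PXV.
have HPX : is_dist PX by apply: mix_dist.
have h1 : mu * mutinfo (jointXY PX W) <= mu * mutinfo (jointXY unif W).
  by apply: ler_wpM2l => //; apply: IY_max => //; exact: HcY.
have h2 : \sum_u PU u * mutinfo (jointXY (mix (PVU u) PXV) W)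
        - \sum_u PU u * mutinfo (jointXY (mix (PVU u) PXV) Wz)
        <= mutinfo (jointXY unif W) - mutinfo (jointXY unif Wz).
  rewrite -sumrB.
  have -> : mutinfo (jointXY unif W) - mutinfo (jointXY unif Wz)
     = \sum_u PU u * (mutinfo (jointXY unif W) - mutinfo (jointXY unif Wz)).
    by rewrite -mulr_suml; case: HPU => _ ->; rewrite mul1r.
  apply: ler_sum => u _; rewrite -mulrBr; apply: ler_wpM2l; first exact: (dist_ge0 HPU).
  have := Hf (mix_dist _ _ (HPVU u) HPXV); by rewrite /fdiff.
have h3 := sum_ge_min Hpv HPXV Hm.
rewrite /G in h3 *.
have E : \sum_v mix PU PVU v * ((mu + 1) * mutinfo (jointXY (PXV v) W) - mutinfo (jointXY (PXV v) Wz))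
   = (mu + 1) * \sum_v mix PU PVU v * mutinfo (jointXY (PXV v) W)
     - \sum_v mix PU PVU v * mutinfo (jointXY (PXV v) Wz).
  rewrite mulr_sumr -sumrB; apply: eq_bigr => v _; rewrite mulrBr mulrCA //.
rewrite E in h3.
rewrite mulrDl mul1r in h3.
rewrite mulrDl mul1r.
rewrite mulrBr.
lra.
Qed.


Lemma G0 P : G 0 P = fdiff W Wz P.
Proof. by rewrite /G /fdiff add0r mul1r. Qed.

Definition Fv (mu : R) (v : 'rV[R]_n) : R :=
  (mu + 1) * (\sum_x `|v ord0 x| * cW W x - \sum_b etz (\sum_x `|v ord0 x| * W x b))
  - (\sum_x `|v ord0 x| * cW Wz x - \sum_b etz (\sum_x `|v ord0 x| * Wz x b)).

Lemma Fv_G mu (v : 'rV[R]_n) : (forall i, 0 <= v ord0 i) -> Fv mu v = G mu (fun i => v ord0 i).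
Proof.
move=> v0; rewrite /Fv /G.
have Hv : forall i, `|v ord0 i| = v ord0 i by move=> i; rewrite ger0_norm.
rewrite (I_form W (fun i => v ord0 i) HW v0) (I_form Wz (fun i => v ord0 i) HWz v0).
rewrite /EE /out /etz.
under eq_bigr => x _ do rewrite Hv.
under [X in _ * (_ - X) - _ = _]eq_bigr => b _.
  under eq_bigr => x _ do rewrite Hv.
  rewrite ger0_norm; last by apply: sumr_ge0 => x _; apply: mulr_ge0 => //; exact: chan_ge0.
  over.
under [X in _ - (X - _) = _]eq_bigr => x _ do rewrite Hv.
under [X in _ - (_ - X) = _]eq_bigr => b _.
  under eq_bigr => x _ do rewrite Hv.
  rewrite ger0_norm; last by apply: sumr_ge0 => x _; apply: mulr_ge0 => //; exact: chan_ge0.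
  over.
by [].
Qed.

Lemma Fv_cont mu : continuous (Fv mu).
Proof.
have ca : forall x : 'I_n, continuous (fun v : 'rV[R]_n => `|v ord0 x|).
  move=> x v; apply: (@continuous_comp _ _ _ (fun v : 'rV[R]_n => v ord0 x) Num.norm).
    exact: coord_continuous.
  exact: norm_continuous.
have cE : forall (B : finType) (V : 'I_n -> B -> R),
  continuous (fun v : 'rV[R]_n => \sum_x `|v ord0 x| * cW V x - \sum_b etz (\sum_x `|v ord0 x| * V x b)).
  move=> B V; apply: cont_sub.
    by apply: cont_sum => x; apply: cont_mulc.
  apply: cont_sum => b v.
  apply: (@continuous_comp _ _ _ (fun v : 'rV[R]_n => \sum_x `|v ord0 x| * V x b) etz).
    by apply: cont_sum => x; apply: cont_mulc.
  exact: eta0_cont.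
apply: cont_sub; last exact: cE.
by apply: cont_cmul; exact: cE.
Qed.

Local Open Scope classical_set_scope.
Lemma exists_min mu : exists Pm, is_dist Pm /\ (forall P, is_dist P -> G mu Pm <= G mu P).
Proof.
pose S1 := [set v : 'rV[R]_n | forall i, (`[(0:R), 1]%classic) (v ord0 i)].
pose S2 := [set v : 'rV[R]_n | \sum_i v ord0 i = 1].
have cS1 : compact S1.
  apply: (@rV_compact _ _ (fun=> `[(0:R), 1]%classic)).
  by move=> _; apply: segment_compact.
have cS2 : closed S2.
  have cs : continuous (fun v : 'rV[R]_n => \sum_i v ord0 i).
    by apply: cont_sum => i; exact: coord_continuous.
  have -> : S2 = (fun v : 'rV[R]_n => \sum_i v ord0 i) @^-1` [set x | x = 1] by [].
  apply: preimage_closed; last exact: closed_eq.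
  by move=> v _; exact: cs.
have cS : compact (S1 `&` S2) by exact: compact_closedI.
have memS (P : 'I_n -> R) : is_dist P -> (S1 `&` S2) (\row_i P i).
  move=> HP; split.
    move=> i; rewrite /= mxE in_itv /=; apply/andP; split; first exact: (dist_ge0 HP).
    case: HP => HP0 <-; exact: le_sum_term.
  rewrite /S2 /=; under eq_bigr => i _ do rewrite mxE.
  by case: HP.
have ne : (S1 `&` S2) !=set0 by exists (\row_i unif i); apply: memS; exact: unif_dist.
have [c cS' cmin] := EVT_min_rV ne cS (continuous_subspaceT (Fv_cont mu)).
rewrite inE in cS'; case: cS' => c1 c2.
have c0 i : 0 <= c ord0 i by have := c1 i; rewrite /= in_itv /= => /andP[].
exists (fun i => c ord0 i); split.
  by split.
move=> P HP.
have := cmin (\row_i P i).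
rewrite inE => /(_ (memS P HP)).
rewrite !Fv_G //; last by move=> i; rewrite mxE; exact: (dist_ge0 HP).
have -> : (fun i => (\row_j P j) ord0 i) = P by apply: funext => i; rewrite mxE.
by [].
Qed.
Local Close Scope classical_set_scope.


Lemma main :
  (forall mu : R, 0 <= mu ->
     exists (k : nat) (PV : 'I_k -> R) (PXV : 'I_k -> 'I_n -> R),
       [/\ (k <= n)%N, is_dist PV, is_chan PXV,
           (forall (m k' : nat) (PU : 'I_m -> R) (PVU : 'I_m -> 'I_k' -> R)
                   (PXV' : 'I_k' -> 'I_n -> R),
              is_dist PU -> is_chan PVU -> is_chan PXV' ->
              lhs_val mu W Wz PU PVU PXV' <= rhs_val mu W Wz PV PXV) &
           (forall (k' : nat) (PV' : 'I_k' -> R) (PXV' : 'I_k' -> 'I_n -> R),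
              (k' <= n)%N -> is_dist PV' -> is_chan PXV' ->
              rhs_val mu W Wz PV' PXV' <= rhs_val mu W Wz PV PXV)]) /\
  (exists Pmax Pmin : 'I_n -> R,
     [/\ is_dist Pmax, is_dist Pmin,
         (forall P, is_dist P -> fdiff W Wz P <= fdiff W Wz Pmax),
         (forall P, is_dist P -> fdiff W Wz Pmin <= fdiff W Wz P) &
         is_secrecy_capacity W Wz (fdiff W Wz Pmax - fdiff W Wz Pmin)]).
Proof.
split.
  move=> mu mu0.
  have [Pm [HPm Hm]] := exists_min mu.
  exists n, unif, (fun j : 'I_n => shift j Pm); split => //.
  - exact: unif_dist.
  - exact: shift_chan.
  - move=> m k' PU PVU PXV' HPU HPVU HPXV.
    rewrite rhs_opt //; exact: lhs_le.
  - move=> k' PV' PXV' _ HPV HPXV.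
    rewrite rhs_opt //; exact: rhs_le.
have [Pm [HPm Hm]] := exists_min 0.
exists unif, Pm; split => //.
- exact: unif_dist.
- move=> P HP; exact: Hf.
- by move=> P HP; rewrite -!G0; exact: Hm.
split.
  move=> k PV PXV HPV HPXV.
  have := @rhs_le 0 _ PV PXV Pm (lexx 0) HPV HPXV Hm.
  by rewrite /rhs_val /secrecy_val !G0 add0r !mul1r.
move=> eps eps0; exists n, unif, (fun j : 'I_n => shift j Pm); split.
- exact: unif_dist.
- exact: shift_chan.
have := @rhs_opt 0 Pm HPm.
rewrite /rhs_val /secrecy_val !G0 add0r !mul1r => ->.
by rewrite ltrBlDr ltrDl.
Qed.

End Main.
End Cyc.
End Alg.

Theorem corollary1 (R : realType) (n : nat) (TY TZ : finType)
  (W : 'I_n -> TY -> R) (Wz : 'I_n -> TZ -> R) :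
  (0 < n)%N -> is_chan W -> is_chan Wz -> dom_cyc_sym W Wz ->
  (forall mu : R, 0 <= mu ->
     exists (k : nat) (PV : 'I_k -> R) (PXV : 'I_k -> 'I_n -> R),
       [/\ (k <= n)%N, is_dist PV, is_chan PXV,
           (* rhs_val at (PV,PXV) bounds every rate-splitting value: sup LHS <= it *)
           (forall (m k' : nat) (PU : 'I_m -> R) (PVU : 'I_m -> 'I_k' -> R)
                   (PXV' : 'I_k' -> 'I_n -> R),
              is_dist PU -> is_chan PVU -> is_chan PXV' ->
              lhs_val mu W Wz PU PVU PXV' <= rhs_val mu W Wz PV PXV) &
           (* and it is the maximum over prefixes V with |V| <= n *)
           (forall (k' : nat) (PV' : 'I_k' -> R) (PXV' : 'I_k' -> 'I_n -> R),
              (k' <= n)%N -> is_dist PV' -> is_chan PXV' ->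
              rhs_val mu W Wz PV' PXV' <= rhs_val mu W Wz PV PXV)]) /\
  (exists Pmax Pmin : 'I_n -> R,
     [/\ is_dist Pmax, is_dist Pmin,
         (forall P, is_dist P -> fdiff W Wz P <= fdiff W Wz Pmax),
         (forall P, is_dist P -> fdiff W Wz Pmin <= fdiff W Wz P) &
         is_secrecy_capacity W Wz (fdiff W Wz Pmax - fdiff W Wz Pmin)]).
Proof.
move=> n0 HW HWz Hd; exact: main.
Qed.
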